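(* Under the standing assumptions, if $0\le a\le 1/4$ then $z(\theta)$ is negative and strictly increasing on $(\pi/2,\pi)$.
   Context: Standing assumptions: $a,b\in\mathbb{R}$ with $b>0$, $1+a+b>0$, $9-27a+b>0$, $2-8a+8a^2+ab\ne0$, $b+1-a\ne0$. Let $f^*(\zeta,\theta)=(\zeta+2\cos\theta)(2\zeta\cos\theta+1)+b\zeta-a(\zeta+2\cos\theta)^3$. Under these assumptions, for each $\theta\in(\pi/2,\pi)$ the polynomial $f^*(\cdot,\theta)$ has exactly one real zero in $(-1,1)$; denote it $w(\theta)$ (so $\zeta(\theta)=1/w(\theta)$). Define $\tau(\theta)=-w(\theta)-2\cos\theta$ and $z(\theta)=-\dfrac{w(\theta)}{\tau(\theta)^3}$ (i.e. $z=-1/(\zeta\tau^3)$). *)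

(* Defs.v *)
From Stdlib Require Import Reals Lra.
Open Scope R_scope.

Definition fstar (a b zeta theta : R) : R :=
  (zeta + 2 * cos theta) * (2 * zeta * cos theta + 1) + b * zeta
  - a * (zeta + 2 * cos theta) ^ 3.

Definition standing (a b : R) : Prop :=
  b > 0 /\ 1 + a + b > 0 /\ 9 - 27 * a + b > 0 /\
  2 - 8 * a + 8 * a ^ 2 + a * b <> 0 /\ b + 1 - a <> 0.

Definition is_w (a b : R) (w : R -> R) : Prop :=
  forall theta, PI / 2 < theta < PI ->
    -1 < w theta < 1 /\ fstar a b (w theta) theta = 0.

Definition tau (w : R -> R) (theta : R) : R := - w theta - 2 * cos theta.

Definition zfun (w : R -> R) (theta : R) : R := - w theta / (tau w theta) ^ 3.

(* Main.v *)
Require Import Defs.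
From Stdlib Require Import Reals Lra Psatz.
Open Scope R_scope.
Lemma posl (a b c w : R) : b > 0 -> 0 <= a <= 1/4 -> -1 < c < 0 -> -1 < w < 1 ->
  (w + 2*c)*(2*w*c+1) + b*w - a*(w+2*c)^3 = 0 -> 0 < w /\ 0 < -w - 2*c.
Proof.
  intros Hb Ha Hc Hw E.
  set (S := -2*c) in *. set (t := -w - 2*c) in *.
  assert (HS : 0 < S < 2) by (unfold S; lra).
  assert (Hwt : w = S - t) by (unfold S, t; lra).
  assert (E' : t*S^2 - t^2*S + b*S - (1+b)*t + a*t^3 = 0).
  { rewrite <- E. unfold S, t. ring. }
  clearbody S t. subst w.
  destruct (Rlt_le_dec 0 t) as [Ht|Ht].
  - split; [|lra].
    destruct (Rlt_le_dec 0 (S - t)) as [H1|H1]; [lra|exfalso].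
    set (m := t - S) in *. assert (0 <= m < 1) by (unfold m; lra).
    assert (Ht': t = S + m) by (unfold m; lra). clearbody m. subst t.
    assert (a*(S+m)^3 <= (S+m)^3/4).
    { assert (0 <= (S+m)^3) by (apply pow_le; lra). nra. }
    assert (K: (S+m)^2/4 < 1 + m*S) by nra.
    assert (b*(-m) <= 0) by nra.
    nra.
  - exfalso. destruct (Req_dec t 0) as [H0|H0].
    + subst t. nra.
    + set (m := -t) in *. assert (0 < m) by (unfold m; lra).
      assert (Ht': t = - m) by (unfold m; lra). clearbody m. subst t.
      assert (S + m < 1) by lra.
      assert (a*m^2 <= m^2/4) by nra.
      assert (S*(S+m) < S) by nra.
      assert (0 < m*(1 - S^2 - m*S - a*m^2)).
      { apply Rmult_lt_0_compat; [lra|]. nra. }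
      nra.
Qed.

Lemma K1 (a b S1 S2 t1 t2 : R) : b > 0 -> 0 <= a <= 1/4 ->
  0 < t1 -> 0 < t2 -> 0 < S1 - t1 -> 0 < S2 - t2 -> S2 - t2 < 1 ->
  t1*S1^2 - t1^2*S1 + b*S1 - (1+b)*t1 + a*t1^3 = 0 ->
  t2*S2^2 - t2^2*S2 + b*S2 - (1+b)*t2 + a*t2^3 = 0 ->
  S1 < S2 -> t1 < t2.
Proof.
  intros Hb Ha H1 H2 H3 H4 H5 E1 E2 HS.
  destruct (Rlt_le_dec t1 t2) as [|Hle]; [assumption|exfalso].
  set (A := S2 - t1). set (B := S2 - t2).
  assert (0 < A) by (unfold A; lra).
  assert (A <= B) by (unfold A, B; lra).
  assert (Br : S2^2 - (t1+t2)*S2 - (1+b) + a*(t1^2+t1*t2+t2^2) < 0).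
  { assert (0 <= t1^2+t1*t2+t2^2) by (assert (0<=t1*t2) by nra; nra).
    assert (a*(t1^2+t1*t2+t2^2) <= (t1^2+t1*t2+t2^2)/3) by nra.
    assert (B < 1) by (unfold B; lra).
    assert (A*A <= A*B) by nra. assert (A*B <= B*B) by nra. assert (B*B < 1) by nra.
    assert (A*A + A*B + B*B < 3) by lra.
    assert (S2^2 - (t1+t2)*S2 + (t1^2+t1*t2+t2^2)/3 = (A*A+A*B+B*B)/3)
      by (unfold A, B; field).
    nra. }
  assert (P : 0 < t1*(S1+S2-t1) + b) by nra.
  assert (D : 0 = (t2-t1)*(S2^2 - (t1+t2)*S2 - (1+b) + a*(t1^2+t1*t2+t2^2))
                 + (S2-S1)*(t1*(S1+S2-t1) + b)).
  { rewrite <- (Rminus_diag_eq _ _ (eq_trans E2 (eq_sym E1))). ring. }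
  assert (0 <= (t2-t1)*(S2^2 - (t1+t2)*S2 - (1+b) + a*(t1^2+t1*t2+t2^2))) by nra.
  assert (0 < (S2-S1)*(t1*(S1+S2-t1) + b)) by (apply Rmult_lt_0_compat; lra).
  lra.
Qed.

Lemma K2 (a b t1 t2 p1 p2 : R) : b > 0 -> 0 <= a ->
  0 < t1 -> t1 < t2 -> 0 < p1 -> 0 < p2 ->
  p1^2*t1^6 + p1*t1^4 + (b*p1+a)*t1^2 - 1 = 0 ->
  p2^2*t2^6 + p2*t2^4 + (b*p2+a)*t2^2 - 1 = 0 -> p2 < p1.
Proof.
  intros Hb Ha H1 H12 Hp1 Hp2 E1 E2.
  destruct (Rlt_le_dec p2 p1) as [|Hle]; [assumption|exfalso].
  assert (T2: t1^2 < t2^2) by nra.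
  assert (0 < t1^2) by (apply pow_lt; lra).
  assert (T4: t1^4 < t2^4) by (replace (t1^4) with (t1^2*t1^2) by ring; replace (t2^4) with (t2^2*t2^2) by ring; nra).
  assert (0 < t1^4) by (apply pow_lt; lra).
  assert (T6: t1^6 < t2^6) by (replace (t1^6) with (t1^4*t1^2) by ring; replace (t2^6) with (t2^4*t2^2) by ring; nra).
  assert (0 < t1^2) by (apply pow_lt; lra).
  assert (0 < t1^4) by (apply pow_lt; lra).
  assert (0 < t1^6) by (apply pow_lt; lra).
  assert (p1^2 <= p2^2) by (apply pow_incr; lra).
  assert (0 < p1^2) by (apply pow_lt; lra).
  assert (p1^2*t1^6 < p2^2*t2^6) by nra.
  assert (p1*t1^4 < p2*t2^4) by nra.
  assert (b*p1 <= b*p2) by nra.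
  assert (0 < b*p1+a) by nra.
  assert ((b*p1+a)*t1^2 <= (b*p1+a)*t2^2) by nra.
  assert ((b*p1+a)*t2^2 <= (b*p2+a)*t2^2) by nra.
  lra.
Qed.

Lemma theta_facts a b w th : standing a b -> is_w a b w -> 0 <= a <= 1/4 ->
  PI/2 < th < PI ->
  -1 < cos th < 0 /\ 0 < w th /\ w th < 1 /\ 0 < tau w th /\
  fstar a b (w th) th = 0.
Proof.
  intros [Hb _] Hw Ha Hth.
  assert (PI > 0) by apply PI_RGT_0.
  assert (cos th < 0) by (apply cos_lt_0; lra).
  assert (cos PI < cos th) by (apply cos_decreasing_1; lra).
  rewrite cos_PI in *.
  destruct (Hw th Hth) as [Hw1 E].
  unfold fstar in E.
  destruct (posl a b (cos th) (w th) Hb Ha ltac:(lra) Hw1 E).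
  unfold tau, fstar. repeat split; lra.
Qed.

Theorem mainTheorem15 (a b : R) (w : R -> R) :
  standing a b ->
  is_w a b w ->
  0 <= a <= 1 / 4 ->
  (forall theta, PI / 2 < theta < PI -> zfun w theta < 0) /\
  (forall t1 t2, PI / 2 < t1 -> t1 < t2 -> t2 < PI -> zfun w t1 < zfun w t2).
Proof.
  intros Hst Hw Ha. split.
  - intros th Hth.
    destruct (theta_facts a b w th Hst Hw Ha Hth) as (_ & Hw0 & _ & Ht & _).
    unfold zfun. assert (0 < tau w th ^ 3) by (apply pow_lt; lra).
    unfold Rdiv. assert (0 < / tau w th ^ 3) by (apply Rinv_0_lt_compat; lra).
    nra.
  - intros th1 th2 H1 H12 H2.
    pose proof Hst as [Hb _].
    assert (PI > 0) by apply PI_RGT_0.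
    destruct (theta_facts a b w th1 Hst Hw Ha ltac:(lra)) as (Hc1 & Hw1 & Hw1' & Ht1 & E1).
    destruct (theta_facts a b w th2 Hst Hw Ha ltac:(lra)) as (Hc2 & Hw2 & Hw2' & Ht2 & E2).
    assert (Hc : cos th2 < cos th1) by (apply cos_decreasing_1; lra).
    assert (Tl : tau w th1 < tau w th2).
    { apply (K1 a b (-2*cos th1) (-2*cos th2)); unfold tau in *; try lra.
      - rewrite <- E1. unfold fstar. ring.
      - rewrite <- E2. unfold fstar. ring. }
    set (p1 := w th1 / tau w th1 ^ 3). set (p2 := w th2 / tau w th2 ^ 3).
    assert (0 < tau w th1 ^ 3) by (apply pow_lt; lra).
    assert (0 < tau w th2 ^ 3) by (apply pow_lt; lra).
    assert (0 < p1) by (unfold p1; apply Rdiv_lt_0_compat; lra).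
    assert (0 < p2) by (unfold p2; apply Rdiv_lt_0_compat; lra).
    assert (p2 < p1).
    { apply (K2 a b (tau w th1) (tau w th2)); try lra.
      - replace (p1 ^ 2 * tau w th1 ^ 6 + p1 * tau w th1 ^ 4 + (b * p1 + a) * tau w th1 ^ 2 - 1)
          with (fstar a b (w th1) th1 / tau w th1).
        + rewrite E1. unfold Rdiv. ring.
        + unfold p1, fstar, tau. field. unfold tau in Ht1. lra.
      - replace (p2 ^ 2 * tau w th2 ^ 6 + p2 * tau w th2 ^ 4 + (b * p2 + a) * tau w th2 ^ 2 - 1)
          with (fstar a b (w th2) th2 / tau w th2).
        + rewrite E2. unfold Rdiv. ring.
        + unfold p2, fstar, tau. field. unfold tau in Ht2. lra. }
    unfold zfun.
    replace (- w th1 / tau w th1 ^ 3) with (- p1) by (unfold p1, Rdiv; ring).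
    replace (- w th2 / tau w th2 ^ 3) with (- p2) by (unfold p2, Rdiv; ring).
    lra.
Qed.
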